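(* Let $A$ be a Heyting algebra, and let $\mathcal{L}=(Expr_{\mathcal{L}},Th_{\mathcal{L}},\mathcal{C})$ with $Expr_{\mathcal{L}}=A$, $Th_{\mathcal{L}}$ the set of proper filters of $A$, and $\mathcal{C}=\{\wedge,\vee,\to,\bot,\top\}$ the Heyting operations of $A$. Then $\mathcal{L}$ is an intuitionistic abstract logic.
   Context: An abstract logic is a triple $\mathcal{L}=(Expr_{\mathcal{L}},Th_{\mathcal{L}},\mathcal{C}_{\mathcal{L}})$ where $Expr_{\mathcal{L}}$ is a set, $Th_{\mathcal{L}}$ a non-empty set of subsets of $Expr_{\mathcal{L}}$ (theories) closed under intersections of non-empty subfamilies, and $\mathcal{C}_{\mathcal{L}}$ a set of operations on $Expr_{\mathcal{L}}$. $\mathcal{L}$ is closed under union of chains if the union of every non-empty chain of theories is a theory. A theory $T$ is totally prime if $T=\bigcap\mathcal{T}$ for a non-empty $\mathcal{T}\subseteq Th_{\mathcal{L}}$ (any size) implies $T\in\mathcal{T}$; $TPTh_{\mathcal{L}}$ is the set of these. An intuitionistic abstract logic is one closed under union of chains with binary connectives $\vee,\wedge,\to$ and constants $\top,\bot$ such that for all $a,b$ and all $T\in TPTh_{\mathcal{L}}$: $a\vee b\in T$ iff $a\in T$ or $b\in T$; $a\wedge b\in T$ iff $a,b\in T$; $a\to b\in T$ iff for every totally prime $T'\supseteq T$, $a\in T'$ implies $b\in T'$; $\top$ lies in every theory and $\bot$ in none. *)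

(* Defs.v *)
Set Implicit Arguments.

Record HeytingAlgebra := {
  ha_car :> Type;
  ha_le : ha_car -> ha_car -> Prop;
  ha_meet : ha_car -> ha_car -> ha_car;
  ha_join : ha_car -> ha_car -> ha_car;
  ha_imp : ha_car -> ha_car -> ha_car;
  ha_bot : ha_car;
  ha_top : ha_car;
  ha_le_refl : forall x, ha_le x x;
  ha_le_trans : forall x y z, ha_le x y -> ha_le y z -> ha_le x z;
  ha_le_antisym : forall x y, ha_le x y -> ha_le y x -> x = y;
  ha_meet_glb : forall x y z, ha_le z (ha_meet x y) <-> (ha_le z x /\ ha_le z y);
  ha_join_lub : forall x y z, ha_le (ha_join x y) z <-> (ha_le x z /\ ha_le y z);
  ha_bot_least : forall x, ha_le ha_bot x;
  ha_top_greatest : forall x, ha_le x ha_top;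
  ha_residuation : forall a b c, ha_le (ha_meet c a) b <-> ha_le c (ha_imp a b)
}.

Definition proper_filter (A : HeytingAlgebra) (F : A -> Prop) : Prop :=
  F (ha_top A) /\
  (forall x y, F x -> ha_le A x y -> F y) /\
  (forall x y, F x -> F y -> F (ha_meet A x y)) /\
  ~ F (ha_bot A).

Definition subset_of (E : Type) (S T : E -> Prop) : Prop := forall x, S x -> T x.

Definition bigcap (E : Type) (F : (E -> Prop) -> Prop) : E -> Prop :=
  fun x => forall T, F T -> T x.

Definition bigcup (E : Type) (F : (E -> Prop) -> Prop) : E -> Prop :=
  fun x => exists T, F T /\ T x.

Definition abstract_logic_theories (E : Type) (Th : (E -> Prop) -> Prop) : Prop :=
  (exists T, Th T) /\
  (forall F : (E -> Prop) -> Prop,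
      (exists T, F T) -> (forall T, F T -> Th T) -> Th (bigcap F)).

Definition closed_under_union_of_chains (E : Type) (Th : (E -> Prop) -> Prop) : Prop :=
  forall C : (E -> Prop) -> Prop,
    (exists T, C T) -> (forall T, C T -> Th T) ->
    (forall T1 T2, C T1 -> C T2 -> subset_of T1 T2 \/ subset_of T2 T1) ->
    Th (bigcup C).

Definition totally_prime (E : Type) (Th : (E -> Prop) -> Prop) (T : E -> Prop) : Prop :=
  Th T /\
  forall F : (E -> Prop) -> Prop,
    (exists T', F T') -> (forall T', F T' -> Th T') -> T = bigcap F -> F T.

Definition intuitionistic_abstract_logic (E : Type) (Th : (E -> Prop) -> Prop)
    (lor land limp : E -> E -> E) (ltop lbot : E) : Prop :=
  abstract_logic_theories Th /\
  closed_under_union_of_chains Th /\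
  (forall T, totally_prime Th T ->
     (forall a b, T (lor a b) <-> (T a \/ T b)) /\
     (forall a b, T (land a b) <-> (T a /\ T b)) /\
     (forall a b, T (limp a b) <->
        (forall T', totally_prime Th T' -> subset_of T T' -> T' a -> T' b))) /\
  (forall T, Th T -> T ltop) /\
  (forall T, Th T -> ~ T lbot).

(* Main.v *)
Require Import Defs.
From Stdlib Require Import Classical FunctionalExtensionality PropExtensionality.
From mathcomp Require classical_sets.
Set Bullet Behavior "Strict Subproofs".
Lemma zorn_wrap (T : Type) (P : (T -> Prop) -> Prop) :
  (forall F : (T -> Prop) -> Prop, (forall X, F X -> P X) ->
     (forall X Y, F X -> F Y -> (forall t, X t -> Y t) \/ (forall t, Y t -> X t)) ->
     P (fun t => exists X, F X /\ X t)) ->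
  exists M, P M /\ forall B, (forall t, M t -> B t) -> ~ (forall t, B t -> M t) -> ~ P B.
Proof.
intros H.
destruct (@classical_sets.Zorn_bigcup T P) as [M [HM HB]].
- intros F FP Ftot.
  assert (E : classical_sets.bigcup F (fun X => X) = (fun t => exists X, F X /\ X t)).
  { apply functional_extensionality. intro t. apply propositional_extensionality.
    split. intros [X a b]. exists X; auto. intros [X [a b]]. exists X; auto. }
  rewrite E. apply H. exact FP. intros X Y a b. exact (Ftot X Y a b).
- exists M. split. exact HM. intros B h1 h2. apply HB. split. exact h1. exact h2.
Qed.

Section HA.
Variable A : HeytingAlgebra.
Notation le := (ha_le A).
Notation mt := (ha_meet A).
Notation jn := (ha_join A).
Notation im := (ha_imp A).

Lemma meet_l x y : le (mt x y) x.
Proof. destruct (proj1 (ha_meet_glb A x y (mt x y)) (ha_le_refl _ _)); auto. Qed.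
Lemma meet_r x y : le (mt x y) y.
Proof. destruct (proj1 (ha_meet_glb A x y (mt x y)) (ha_le_refl _ _)); auto. Qed.
Lemma meet_i x y z : le z x -> le z y -> le z (mt x y).
Proof. intros; apply ha_meet_glb; auto. Qed.
Lemma join_l x y : le x (jn x y).
Proof. destruct (proj1 (ha_join_lub A x y (jn x y)) (ha_le_refl _ _)); auto. Qed.
Lemma join_r x y : le y (jn x y).
Proof. destruct (proj1 (ha_join_lub A x y (jn x y)) (ha_le_refl _ _)); auto. Qed.
Lemma join_e x y z : le x z -> le y z -> le (jn x y) z.
Proof. intros; apply ha_join_lub; auto. Qed.
Lemma lt_ x y z : le x y -> le y z -> le x z.
Proof. apply ha_le_trans. Qed.

Lemma distr c a b : le (mt c (jn a b)) (jn (mt c a) (mt c b)).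
Proof.
  set (r := jn (mt c a) (mt c b)).
  assert (H : le (jn a b) (im c r)).
  { apply join_e; apply ha_residuation.
    - apply lt_ with (mt c a). apply meet_i. apply meet_r. apply meet_l. apply join_l.
    - apply lt_ with (mt c b). apply meet_i. apply meet_r. apply meet_l. apply join_r. }
  apply ha_residuation in H.
  apply lt_ with (mt (jn a b) c). apply meet_i. apply meet_r. apply meet_l. exact H.
Qed.

Lemma mp a b : le (mt (im a b) a) b.
Proof. apply ha_residuation. apply ha_le_refl. Qed.

Definition gen (T : A -> Prop) (a : A) : A -> Prop :=
  fun y => exists t, T t /\ le (mt t a) y.

Lemma gen_filter T a : proper_filter A T -> ~ gen T a (ha_bot A) -> proper_filter A (gen T a).
Proof.
  intros [Ht [Hu [Hm Hb]]] Hg. split; [|split; [|split]].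
  - exists (ha_top A). split. auto. apply ha_top_greatest.
  - intros x y [t [h1 h2]] hxy. exists t. split. auto. eapply lt_; eauto.
  - intros x y [t [h1 h2]] [t' [h1' h2']]. exists (mt t t'). split. auto.
    apply meet_i.
    + eapply lt_; [|exact h2]. apply meet_i. eapply lt_. apply meet_l. apply meet_l. apply meet_r.
    + eapply lt_; [|exact h2']. apply meet_i. eapply lt_. apply meet_l. apply meet_r. apply meet_r.
  - exact Hg.
Qed.

Lemma gen_sub T a : proper_filter A T -> forall y, T y -> gen T a y.
Proof. intros _ y h. exists y. split. auto. apply meet_l. Qed.
Lemma gen_a T a : proper_filter A T -> gen T a a.
Proof. intros [Ht _] . exists (ha_top A). split. auto. apply meet_r. Qed.

Lemma pf_top T : proper_filter A T -> T (ha_top A). Proof. intros [h _]; exact h. Qed.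
Lemma pf_up T : proper_filter A T -> forall x y, T x -> le x y -> T y. Proof. intros [_ [h _]]; exact h. Qed.
Lemma pf_meet T : proper_filter A T -> forall x y, T x -> T y -> T (mt x y). Proof. intros [_ [_ [h _]]]; exact h. Qed.
Lemma pf_bot T : proper_filter A T -> ~ T (ha_bot A). Proof. intros [_ [_ [_ h]]]; exact h. Qed.

Arguments pf_top {T}. Arguments pf_up {T}. Arguments pf_meet {T}. Arguments pf_bot {T}.

Lemma chain_filter (C : (A -> Prop) -> Prop) :
  (exists T, C T) -> (forall T, C T -> proper_filter A T) ->
  (forall T1 T2, C T1 -> C T2 -> subset_of T1 T2 \/ subset_of T2 T1) ->
  proper_filter A (bigcup C).
Proof.
  intros [T0 h0] HC Hch. split; [|split; [|split]].
  - exists T0. split. auto. apply (pf_top (HC T0 h0)).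
  - intros x y [X [h1 h2]] hxy. exists X. split. auto. apply (pf_up (HC X h1)) with x; auto.
  - intros x y [X [h1 h2]] [Y [h1' h2']].
    destruct (Hch X Y h1 h1') as [s|s].
    + exists Y. split. auto. apply (pf_meet (HC Y h1')); auto.
    + exists X. split. auto. apply (pf_meet (HC X h1)); auto.
  - intros [X [h1 h2]]. apply (pf_bot (HC X h1)). auto.
Qed.

Lemma pf_eq (T : A -> Prop) X : subset_of T X -> subset_of X T -> T = X.
Proof.
  intros h1 h2. apply functional_extensionality. intro y.
  apply propositional_extensionality. split; auto.
Qed.

Theorem main (Hnontriv : ha_bot A <> ha_top A) :
  intuitionistic_abstract_logic (@proper_filter A)
    (ha_join A) (ha_meet A) (ha_imp A) (ha_top A) (ha_bot A).
Proof.
  split; [|split; [|split; [|split]]].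
  - split.
    + exists (fun x => le (ha_top A) x). split; [|split; [|split]].
      * apply ha_le_refl.
      * intros; eapply lt_; eauto.
      * intros; apply meet_i; auto.
      * intro h. apply Hnontriv. apply ha_le_antisym. apply ha_bot_least. auto.
    + intros F [T0 h0] HF. split; [|split; [|split]].
      * intros T hT. apply (pf_top (HF T hT)).
      * intros u v hx hxy T hT. apply (pf_up (HF T hT)) with u; auto. apply hx; auto.
      * intros u v hx hy T hT. apply (pf_meet (HF T hT)); [apply hx | apply hy]; auto.
      * intro h. exact (pf_bot (HF T0 h0) (h T0 h0)).
  - intros C h1 h2 h3. apply chain_filter; auto.
  - intros T [HT Htp]. pose proof HT as HT'. destruct HT' as [Ht [Hu [Hm Hb]]].
    split; [|split].
    + intros a b. split.
      * intro hab. apply NNPP. intro hn. apply not_or_and in hn. destruct hn as [na nb].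
        destruct (classic (gen T a (ha_bot A))) as [[t [ht1 ht2]]|ga].
        { apply nb. apply Hu with (mt t (jn a b)). auto.
          eapply lt_. apply distr. apply join_e. eapply lt_. exact ht2. apply ha_bot_least. apply meet_r. }
        destruct (classic (gen T b (ha_bot A))) as [[t [ht1 ht2]]|gb].
        { apply na. apply Hu with (mt t (jn a b)). auto.
          eapply lt_. apply distr. apply join_e. apply meet_r. eapply lt_. exact ht2. apply ha_bot_least. }
        assert (E : T = bigcap (fun X => X = gen T a \/ X = gen T b)).
        { apply pf_eq.
          - intros y hy X [->| ->]; apply gen_sub; auto.
          - intros y hy. destruct (hy _ (or_introl eq_refl)) as [t [t1 t2]].
            destruct (hy _ (or_intror eq_refl)) as [t' [t1' t2']].
            apply Hu with (mt (mt t t') (jn a b)). auto.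
            eapply lt_. apply distr. apply join_e.
            -- eapply lt_; [|exact t2]. apply meet_i. eapply lt_. apply meet_l. apply meet_l. apply meet_r.
            -- eapply lt_; [|exact t2']. apply meet_i. eapply lt_. apply meet_l. apply meet_r. apply meet_r. }
        assert (Hf : (fun X => X = gen T a \/ X = gen T b) T).
        { apply (Htp (fun X => X = gen T a \/ X = gen T b)). exists (gen T a). left. reflexivity.
          intros X [-> | ->]; apply gen_filter; auto. exact E. }
        destruct Hf as [e|e].
        { apply na. rewrite e. apply gen_a; auto. }
        { apply nb. rewrite e. apply gen_a; auto. }
      * intros [h|h]. apply Hu with a; auto. apply join_l. apply Hu with b; auto. apply join_r.
    + intros a b. split.
      * intro h. split; apply Hu with (mt a b); auto. apply meet_l. apply meet_r.
      * intros [h h']. auto.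
    + intros a b. split.
      * intros h T' [HT2 _] hs ha. destruct HT2 as [_ [Hu2 [Hm2 _]]].
        apply Hu2 with (mt (im a b) a). auto. apply mp.
      * intro H. apply NNPP. intro hn.
        set (P := fun X : A -> Prop => (forall x, ~ X x) \/
                    (proper_filter A X /\ subset_of (gen T a) X /\ ~ X b)).
        destruct (@zorn_wrap A P) as [M [HM Hmax]].
        { intros F FP Ftot.
          destruct (classic (exists X x, F X /\ X x)) as [[X0 [x0 [f0 x0']]]|ne].
          2:{ left. intros x [X [h1 h2]]. apply ne. eauto. }
          assert (Hc : forall X, F X /\ (exists x, X x) ->
                        proper_filter A X /\ subset_of (gen T a) X /\ ~ X b).
          { intros X [h1 [x h2]]. destruct (FP X h1) as [e|e]. exfalso; eapply e; eauto. auto. }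
          assert (Eq : (fun t => exists X, F X /\ X t) = bigcup (fun X => F X /\ exists x, X x)).
          { apply pf_eq. intros t [X [h1 h2]]. exists X. split; eauto.
            intros t [X [[h1 _] h2]]. exists X. auto. }
          right. rewrite Eq. split; [|split].
          - apply chain_filter. exists X0; eauto. intros X h. apply Hc; auto.
            intros X Y [h1 _] [h2 _]. apply Ftot; auto.
          - intros y hy. exists X0. split. eauto. apply (Hc X0). eauto. exact hy.
          - intros [X [h1 h2]]. apply (proj2 (proj2 (Hc X (conj h1 (ex_intro _ b h2))))). exact h2. }
        assert (Gb : ~ gen T a b).
        { intros [t [h1 h2]]. apply hn. apply Hu with t; auto. apply ha_residuation. exact h2. }
        assert (PG : proper_filter A (gen T a)).
        { apply gen_filter. auto. intro g. apply Gb. destruct g as [t [h1 h2]].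
          exists t. split. auto. eapply lt_. exact h2. apply ha_bot_least. }
        assert (HMx : proper_filter A M /\ subset_of (gen T a) M /\ ~ M b).
        { destruct HM as [e|e]. 2: exact e. exfalso.
          apply (Hmax (gen T a)). intros t h. exfalso. eapply e; eauto.
          intro hs. eapply e. apply hs. apply gen_a. auto.
          right. split; [|split]; auto. intros y hy; auto. }
        destruct HMx as [HMf [HMs HMb]].
        apply HMb. apply (H M).
        2:{ intros y hy. apply HMs. apply gen_sub; auto. }
        2:{ apply HMs. apply gen_a. auto. }
        split. exact HMf.
        intros F [X0 h0] HF E.
        apply NNPP. intro nF. apply HMb. rewrite E. intros X hX.
        apply NNPP. intro nb.
        apply (Hmax X).
        { rewrite E. intros y hy. apply hy. auto. }
        { intro hs. apply nF. replace M with X. auto. symmetry. apply pf_eq; auto.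
          rewrite E. intros y hy. apply hy. auto. }
        right. split; [|split]; auto.
        intros y hy. assert (My : M y) by (apply HMs; auto). rewrite E in My. apply My. auto.
- intros T h. exact (pf_top h).
  - intros T h. exact (pf_bot h).
Qed.
End HA.

Theorem lemma4p4 (A : HeytingAlgebra) (Hnontriv : ha_bot A <> ha_top A) :
  intuitionistic_abstract_logic (@proper_filter A)
    (ha_join A) (ha_meet A) (ha_imp A) (ha_top A) (ha_bot A).
Proof. exact (@main A Hnontriv). Qed.
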